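(* Let $G$ be a connected graph with a vertex $u$ of degree $1$ and a vertex $v$ of maximum degree $\Delta \geq 2$ such that $u$ and $v$ are not adjacent. Then $mp(G+uv) \leq mp(G)$; in particular $G$ is not saturated.
   Context: All graphs are finite and simple. A degree monotone path in a graph $G$ is a path $v_1v_2\ldots v_m$ such that $\deg(v_1)\le \cdots\le \deg(v_m)$ or $\deg(v_1)\ge \cdots\ge \deg(v_m)$ (degrees taken in $G$); its length is its number of vertices. $mp(G)$ denotes the maximum length of a degree monotone path in $G$. $G+uv$ denotes $G$ with the edge $uv$ added. A graph $G$ is saturated if $mp(G+e)>mp(G)$ for every pair $e$ of non-adjacent vertices of $G$. *)

(* Defs.v *)
(* A finite simple graph on vertex type T : finType is an
   adjacency relation e : rel T that is symmetric and irreflexive. *)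
From mathcomp Require Import all_boot.
Set Implicit Arguments. Unset Strict Implicit. Unset Printing Implicit Defensive.

Section Graphs.
Variable T : finType.

Definition deg (e : rel T) (x : T) : nat := #|[pred y | e x y]|.

Definition is_path (e : rel T) (s : seq T) : bool :=
  uniq s && (if s is x :: s' then path e x s' else true).

Definition dm_path (e : rel T) (s : seq T) : bool :=
  is_path e s &&
  (sorted leq (map (deg e) s) || sorted geq (map (deg e) s)).

(* mp e = maximum number of vertices of a degree monotone path;
   paths have distinct vertices, hence at most #|T| vertices. *)
Definition mp (e : rel T) : nat :=
  \max_(n < #|T|.+1 | [exists s : n.-tuple T, dm_path e s]) n.

Definition add_edge (e : rel T) (u v : T) : rel T :=
  fun x y => [|| e x y, (x == u) && (y == v) | (x == v) && (y == u)].

Definition connected (e : rel T) : Prop := forall x y : T, connect e x y.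

Definition saturated (e : rel T) : Prop :=
  forall x y : T, x != y -> ~~ e x y -> mp e < mp (add_edge e x y).

End Graphs.

(* Main.v *)
Require Import Defs.
From mathcomp Require Import all_boot.
Set Implicit Arguments. Unset Strict Implicit.

Lemma deg_ge (T : finType) (e : rel T) x (l : seq T) :
  uniq l -> all (e x) l -> size l <= deg e x.
Proof.
move=> Ul Al; rewrite -(card_uniqP Ul) /deg; apply: subset_leq_card.
by apply/subsetP => y Hy; rewrite inE; exact: (allP Al).
Qed.

Lemma deg_mono (T : finType) (e e' : rel T) x :
  (forall y, e x y -> e' x y) -> deg e x <= deg e' x.
Proof. move=> H; apply: subset_leq_card; apply/subsetP => y; rewrite !inE; exact: H. Qed.

Lemma uniq_size_card (T : finType) (s : seq T) : uniq s -> size s <= #|T|.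
Proof. move=> U; rewrite -(card_uniqP U); exact: max_card. Qed.

Lemma le_last (a : nat) l : path leq a l -> all (fun b => b <= last a l) (a :: l).
Proof.
elim: l a => [|b l IH] a /=; first by rewrite leqnn.
case/andP => ab pb; have := IH _ pb => /= /andP[bl al].
by rewrite (leq_trans ab bl) bl al.
Qed.

Lemma crossing (T : finType) (e : rel T) (c : seq T) p x :
  x \in c -> last x p \notin c -> path e x p ->
  exists a b, [/\ a \in c, b \notin c & e a b].
Proof.
elim: p x => [|y p IH] x /=; first by move=> ->.
move=> xc lc /andP[exy py]; case: (boolP (y \in c)) => yc.
  exact: IH yc lc py.
by exists x, y.
Qed.

Lemma dm_rev (T : finType) (r : rel T) s : symmetric r -> dm_path r s -> dm_path r (rev s).
Proof.
move=> sr; rewrite /dm_path /is_path rev_uniq !map_rev !rev_sorted.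
case: s => [|x t] //=; rewrite lastI rev_rcons rev_path.
case/andP => /andP[-> pt] so; apply/andP; split.
  by rewrite (eq_path (e' := r)) // => a b; rewrite sr.
by rewrite orbC.
Qed.

Lemma nbr2 (T : finType) (e : rel T) x a b : e x a -> e x b -> a != b -> 2 <= deg e x.
Proof. move=> ha hb ab; apply: (deg_ge (l := [:: a; b])); by rewrite /= ?inE ?ab ?ha ?hb. Qed.

Lemma nbr3 (T : finType) (e : rel T) x a b c : e x a -> e x b -> e x c ->
  a != b -> a != c -> b != c -> 3 <= deg e x.
Proof.
move=> ha hb hc ab ac bc; apply: (deg_ge (l := [:: a; b; c])).
  by rewrite /= !inE negb_or ab ac bc.
by rewrite /= ha hb hc.
Qed.

Lemma split_nbrs (T : finType) (x a : T) p1 p2 :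
  uniq (x :: p1 ++ a :: p2) -> forall z, z \in p2 -> last x p1 != z.
Proof.
rewrite -cat_cons cat_uniq => /and3P[_ H _] z zp; apply/eqP => E.
move: H; apply/negP; rewrite negbK; apply/hasP.
by exists (last x p1); rewrite ?mem_last // E inE zp orbT.
Qed.

Lemma split_last (T : finType) (x a : T) p1 p2 :
  uniq (x :: p1 ++ a :: p2) -> last x p1 != a.
Proof.
rewrite -cat_cons cat_uniq => /and3P[_ H _]; apply/eqP => E.
move: H; apply/negP; rewrite negbK; apply/hasP.
by exists (last x p1); rewrite ?mem_last // E inE eqxx.
Qed.

Lemma u_last (T : finType) (e : rel T) x p u : symmetric e ->
  path e x p -> uniq (x :: p) -> deg e u = 1 -> u \in p -> u = last x p.
Proof.
move=> se Hp U du Hu; move: Hp U; case/splitPr: Hu => p1 p2.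
rewrite cat_path => /andP[_ /= /andP[h1 h2]] U.
case: p2 h2 U => [|z p3]; first by rewrite last_cat.
move=> /= /andP[uz _] U; have := @nbr2 _ e u (last x p1) z.
rewrite (split_nbrs U (z := z)) ?inE ?eqxx // se h1 uz du.
by move=> /(_ isT isT isT).
Qed.

Lemma tail_geq (T : finType) (e : rel T) : symmetric e -> forall t x y,
  path e x t -> uniq (x :: t) -> all (fun z => deg e z <= 2) (x :: t) ->
  e x y -> y \notin x :: t -> path geq (deg e x) (map (deg e) t).
Proof.
move=> se; elim=> [|z t IH] x y //= /andP[exz pz] /andP[xn U] /andP[dx /andP[dz Ha]] exy yn.
apply/andP; split.
  have := @nbr2 _ e x y z exy exz; rewrite inE negb_or in yn.
  case/andP: yn => _ /norP[yz _] => /(_ yz) d2.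
  exact: leq_trans dz d2.
apply: (IH z x) => //=; try by rewrite dz.
by rewrite se.
Qed.

Lemma head_cross (T : finType) (e : rel T) x t a b u : symmetric e ->
  path e x t -> uniq (x :: t) -> last x t = u -> deg e u = 1 ->
  all (fun z => deg e z <= 2) (x :: t) -> a \in x :: t -> b \notin x :: t -> e a b -> a = x.
Proof.
move=> se Hp U Hl du Ha; rewrite inE => /orP[/eqP //|]; move=> Hat.
move: Hp U Hl Ha; case/splitPr: Hat => p1 p2.
rewrite cat_path => /andP[_ /= /andP[h1 h2]] U Hl Ha bn eab.
have lb : last x p1 != b.
  apply/eqP => E; move: bn; rewrite -E -cat_cons mem_cat mem_last //.
have la := split_last U.
case: p2 h2 U Hl Ha bn => [|z p3].
  move=> _ U; rewrite last_cat /= => Hl; subst a.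
  have := @nbr2 _ e u (last x p1) b; rewrite se h1 eab lb du.
  by move=> /(_ isT isT isT).
move=> /andP[az _] U _ Ha bn.
have zb : z != b by apply/eqP => E; move: bn; rewrite -E !(inE, mem_cat) eqxx !orbT.
have := @nbr3 _ e a (last x p1) z b; rewrite se h1 az eab lb zb.
rewrite (split_nbrs U (z := z)) ?inE ?eqxx // => /(_ isT isT isT isT isT isT).
have : a \in x :: p1 ++ [:: a, z & p3] by rewrite -cat_cons mem_cat inE eqxx orbT.
have Ha' : all (fun z => deg e z <= 2) (x :: p1 ++ [:: a, z & p3]) by [].
by move/(allP Ha') => d2 d3; have := leq_trans d3 d2.
Qed.

Lemma core_step (T : finType) (e : rel T) u v x t : symmetric e -> connected e ->
  deg e u = 1 -> 2 <= deg e v ->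
  path e x t -> uniq (x :: t) -> last x t = u ->
  all (fun z => deg e z <= 2) (x :: t) -> v \notin x :: t ->
  (exists t', dm_path e t' /\ (size t).+1 < size t') \/
  (exists b, [/\ e b x, b \notin x :: t & deg e b <= 1]).
Proof.
move=> se conn du dv Hp U Hl Ha Hv.
have /connectP [p pp lp] := conn x v.
have [a [b [ac bc eab]]] := crossing (c := x :: t) (mem_head x t) (etrans (esym (f_equal (fun w => w \notin x :: t) lp)) Hv) pp.
have ax := head_cross se Hp U Hl du Ha ac bc eab; subst a.
case: (leqP 2 (deg e b)) => db; last by right; exists b; rewrite se eab bc -ltnS.
left; exists [:: b, x & t]; split => //.
have TG := tail_geq se Hp U Ha eab bc.
have := allP Ha x (mem_head _ _) => dx.
rewrite /dm_path /is_path; apply/andP; split.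
  move: U; rewrite /= => /andP[-> ->]; rewrite andbT; move: bc; rewrite inE negb_or => /andP[-> ->].
  by rewrite se eab Hp.
apply/orP; right; rewrite /= TG andbT; exact: (leq_trans dx db).
Qed.

Lemma core (T : finType) (e : rel T) u v : symmetric e -> connected e ->
  deg e u = 1 -> 2 <= deg e v -> forall n x t, #|T| - size t <= n ->
  path e x t -> uniq (x :: t) -> last x t = u ->
  all (fun z => deg e z <= 2) (x :: t) -> v \notin x :: t ->
  exists t', dm_path e t' /\ (size t).+1 < size t'.
Proof.
move=> se conn du dv; elim=> [|n IH] x t Hn Hp U Hl Ha Hv;
  (case: (core_step se conn du dv Hp U Hl Ha Hv) => // -[b [ebx bn db]]);
  have U' : uniq [:: b, x & t] by rewrite cons_uniq bn U.
  have := uniq_size_card U' => /=; move: Hn; rewrite leqn0 subn_eq0.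
  move=> H1 H2; have := leq_trans H2 H1; by rewrite ltnNge leqnSn.
have bv : b \notin v :: x :: t.
  rewrite in_cons negb_or bn andbT; apply/eqP => E; subst b; have := leq_trans dv db; by [].
have Hn' : #|T| - size (x :: t) <= n.
  by move: Hn; rewrite /= subnS; case: (#|T| - size t).
have Hp' : path e b (x :: t) by rewrite /= ebx Hp.
have Ha' : all (fun z => deg e z <= 2) (b :: x :: t).
  by apply/andP; split; [exact: (leq_trans db) | exact: Ha].
have bv' : v \notin b :: x :: t.
  move: bv; rewrite !in_cons !negb_or => /andP[H1 _].
  by rewrite eq_sym H1 /=; rewrite in_cons negb_or in Hv.
have [t' [dm st]] := IH b (x :: t) Hn' Hp' U' Hl Ha' bv'.
exists t'; split => //; exact: ltn_trans st.
Qed.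

Lemma ae_up (T : finType) (e : rel T) u v x y : e x y -> add_edge e u v x y.
Proof. by rewrite /add_edge => ->. Qed.

Lemma ae_down (T : finType) (e : rel T) u v x y : x != v -> y != v ->
  add_edge e u v x y -> e x y.
Proof.
rewrite /add_edge => /negPf xv /negPf yv /or3P[//||]; by rewrite ?xv ?yv ?andbF.
Qed.

Lemma ae_downv (T : finType) (e : rel T) u v x : x != u -> u != v ->
  add_edge e u v x v -> e x v.
Proof.
rewrite /add_edge => /negPf xu /negPf uv /or3P[//||]; by rewrite ?xu ?andbF // => /andP[/eqP -> /eqP E]; move: uv; rewrite E eqxx.
Qed.

Lemma ae_sym (T : finType) (e : rel T) u v : symmetric e -> symmetric (add_edge e u v).
Proof.
move=> se x y; rewrite /add_edge se; case: (e y x) => //=.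
by case: (x == u); case: (y == v); case: (x == v); case: (y == u).
Qed.

Lemma deg_other (T : finType) (e : rel T) u v x : x != u -> x != v ->
  deg (add_edge e u v) x = deg e x.
Proof.
move=> /negPf xu /negPf xv; apply: eq_card => y; by rewrite !inE /add_edge xu xv /= orbF.
Qed.

Lemma deg_u (T : finType) (e : rel T) u v : u != v -> ~~ e u v ->
  deg (add_edge e u v) u = (deg e u).+1.
Proof.
move=> /negPf uv nuv; rewrite /deg -add1n.
have -> : 1 = (v \notin [pred y | e u y]) :> nat by rewrite inE nuv.
rewrite -cardU1; apply: eq_card => y; by rewrite !inE /add_edge eqxx uv /= orbF orbC.
Qed.

Lemma deg_v (T : finType) (e : rel T) u v : symmetric e -> u != v -> ~~ e u v ->
  deg (add_edge e u v) v = (deg e v).+1.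
Proof.
move=> se /negPf uv nuv; rewrite /deg -add1n.
have -> : 1 = (u \notin [pred y | e v y]) :> nat by rewrite inE se nuv.
rewrite -cardU1; apply: eq_card => y; by rewrite !inE /add_edge eqxx eq_sym uv /= orbC.
Qed.

Lemma path_down (T : finType) (e : rel T) u v : forall t x,
  path (add_edge e u v) x t -> v \notin x :: t -> path e x t.
Proof.
elim=> [|y t IH] x //= /andP[exy pt]; rewrite !in_cons !negb_or => /and3P[xv yv tv].
rewrite (ae_down _ _ exy) 1?eq_sym //; apply: IH => //; by rewrite in_cons negb_or yv.
Qed.

Lemma sorted_down (T : finType) (e : rel T) u v x p :
  v \notin x :: p -> u \notin p ->
  sorted leq (map (deg (add_edge e u v)) (x :: p)) -> sorted leq (map (deg e) (x :: p)).
Proof.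
move=> Hv Hu; have E : map (deg e) p = map (deg (add_edge e u v)) p.
  apply/eq_in_map => y yp; rewrite deg_other //.
    by apply/eqP => E; move: Hu; rewrite -E yp.
  by apply/eqP => E; move: Hv; rewrite -E in_cons yp orbT.
have dx : deg e x <= deg (add_edge e u v) x by apply: deg_mono => y; apply: ae_up.
rewrite /= E; case: (map _ p) => [|z l] //= /andP[h ->]; by rewrite (leq_trans dx h).
Qed.

Lemma le2 (T : finType) (e : rel T) u v x p :
  deg (add_edge e u v) u = 2 -> last x p = u ->
  sorted leq (map (deg (add_edge e u v)) (x :: p)) -> all (fun y => deg e y <= 2) (x :: p).
Proof.
move=> du' Hl S; apply/allP => y yp.
have dy : deg e y <= deg (add_edge e u v) y by apply: deg_mono => z; apply: ae_up.
apply: (leq_trans dy).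
have -> : 2 = deg (add_edge e u v) (last x p) by rewrite Hl du'.
rewrite -last_map.
have := le_last S => /allP; apply; exact: (map_f _ yp).
Qed.

Lemma M_up (T : finType) (e : rel T) (u v : T) :
  symmetric e -> connected e ->
  deg e u = 1 ->
  (forall x : T, deg e x <= deg e v) -> 2 <= deg e v ->
  ~~ e u v -> forall s,
  is_path (add_edge e u v) s -> sorted leq (map (deg (add_edge e u v)) s) ->
  exists t, dm_path e t /\ size s <= size t.
Proof.
move=> se conn du dmax dv nuv.
have uv : u != v by apply/eqP => E; move: dv; rewrite -E du.
set e' := add_edge e u v.
have du' : deg e' u = 2 by rewrite /e' deg_u // du.
have dvmax : forall x, x != v -> deg e' x < deg e' v.
  move=> x xv; rewrite /e' deg_v //; case: (eqVneq x u) => [->|xu].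
    by rewrite du'.
  by rewrite deg_other // ltnS.
move=> s Hs S; case: (boolP (v \in s)) => Hv.
  move: Hs S; case/splitPr: Hv => p q.
  case: q => [|z q]; last first.
    rewrite map_cat => /andP[U _] /cat_sorted2 [_ /= /andP[vz _]].
    move: U; rewrite cat_uniq => /and3P[_ _ /= /andP[]]; rewrite in_cons negb_or => /andP[zv _] _.
    by move: vz; rewrite leqNgt dvmax // eq_sym.
  case: p => [|x p]; first by move=> _ _; exists [:: v].
  move=> /andP[U P] S.
  have [U1 Hv1] : uniq (x :: p) /\ v \notin x :: p.
    move: U; rewrite cat_uniq /= orbF andbT => /andP[-> ->]; by [].
  move: P; rewrite cat_path /= andbT => /andP[P' Pl].
  have P : path e x p by exact: path_down P' Hv1.
  have S1 : sorted leq (map (deg e') (x :: p)).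
    by move: S; rewrite map_cat => /cat_sorted2 [].
  case: (eqVneq (last x p) u) => Hl.
    have A := le2 du' Hl S1.
    have [t' [dm st]] := core se conn du dv (leqnn _) P U1 Hl A Hv1.
    exists t'; split => //; by rewrite size_cat /= addn1.
  exists (x :: p ++ [:: v]); split => //.
  have Hu : u \notin p by apply/negP => up; move: Hl; rewrite -(u_last se P U1 du up) eqxx.
  have S2 := sorted_down Hv1 Hu S1.
  rewrite /dm_path /is_path U /= cat_path P /= (ae_downv Hl uv Pl) /=.
  apply/orP; left; rewrite map_cat cat_path; move: S2 => /= ->.
  by rewrite /= andbT last_map; exact: dmax.
case: s Hs S Hv => [|x t]; first by exists [::].
move=> /andP[U P'] S Hv.
have P : path e x t by exact: path_down P' Hv.
case: (boolP (u \in t)) => Hu.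
  have Hl := esym (u_last se P U du Hu).
  have A := le2 du' Hl S.
  have [t' [dm st]] := core se conn du dv (leqnn _) P U Hl A Hv.
  exists t'; split => //; exact: ltnW.
exists (x :: t); split => //.
by rewrite /dm_path /is_path U P (sorted_down Hv Hu S).
Qed.

Theorem lemma2p2 (T : finType) (e : rel T) (u v : T) :
  symmetric e -> irreflexive e -> connected e ->
  deg e u = 1 ->
  (forall x : T, deg e x <= deg e v) -> 2 <= deg e v ->
  ~~ e u v ->
  mp (add_edge e u v) <= mp e /\ ~ saturated e.
Proof.
move=> se ire conn du dmax dv nuv.
have uv : u != v by apply/eqP => E; move: dv; rewrite -E du.
have H1 : mp (add_edge e u v) <= mp e.
  rewrite /mp; apply/bigmax_leqP => n /existsP [s Hs].
  have [t [dt st]] : exists t, dm_path e t /\ size s <= size t.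
    move: (Hs) => /andP[Hp /orP[Su|Sd]]; first exact: (M_up se conn du dmax dv nuv Hp Su).
    have /andP[Hp' _] := dm_rev (ae_sym u v se) Hs.
    have Sr : sorted leq (map (deg (add_edge e u v)) (rev s)) by rewrite map_rev rev_sorted.
    have [t [dt st]] := M_up se conn du dmax dv nuv Hp' Sr.
    by exists t; rewrite size_rev in st.
  have tT : size t < #|T|.+1 by rewrite ltnS; apply: uniq_size_card; case/andP: dt => /andP[].
  apply: leq_trans (leq_bigmax_cond (Ordinal tT) _).
    by rewrite /= -(size_tuple s).
  by apply/existsP; exists (in_tuple t).
split => // Sat; have := Sat u v uv nuv; by rewrite ltnNge H1.
Qed.
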